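(* Let $K$ and $L$ be positive integers. Consider the $K$-user single-input single-output (SISO) broadcast channel with symbol extension factor $L$ and no channel state information at the transmitter (CSIT), as described in the context. Then the maximum achievable SpAC is $\frac{L-K+1}{L}$; equivalently, the largest achievable number of streams per user is $d = L-K+1$.
   Context: Model: one transmitter and $K$ receivers, each with a single antenna. Over $L$ channel uses (symbol extension factor $L$), receiver $i\in\{1,\dots,K\}$ observes $\mathbf{y}_i = \mathbf{H}_{i,i}\sum_{j=1}^K \mathbf{Q}_j\mathbf{x}_j + \mathbf{n}_i \in \mathbb{C}^{L}$, where $\mathbf{H}_{i,i}\in\mathbb{C}^{L\times L}$ is diagonal with the channel coefficients on the diagonal, $\mathbf{x}_j\in\mathbb{C}^{d}$ is the finite-alphabet symbol vector intended for receiver $j$, $\mathbf{Q}_j\in\mathbb{C}^{L\times d}$ is the precoder for $\mathbf{x}_j$ (of rank $d$), and $\mathbf{n}_i$ is Gaussian noise. No CSIT means the precoders $\mathbf{Q}_1,\dots,\mathbf{Q}_K$ are fixed and may not depend on the channel coefficients. For receiver $i$, the desired-signal subspace is $\mathcal{S}_i=\mathrm{span}(\mathbf{H}_{i,i}\mathbf{Q}_i)$ and the interference subspace is $\mathcal{I}_i=\sum_{j\neq i}\mathrm{span}(\mathbf{H}_{i,i}\mathbf{Q}_j)$ (sum of column spaces). A value $d$ is achievable if there exist such channel-independent precoders such that, for almost every realization of the channel coefficients, for every receiver $i$: (a) $\sum_{j=1}^K \mathrm{span}(\mathbf{H}_{i,i}\mathbf{Q}_j)=\mathbb{C}^{L}$,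 and (b) $\mathcal{S}_i\not\subseteq\mathcal{I}_i$. SpAC (symbols per transmit antenna per channel use) of such a scheme is $d/L$; the maximum achievable SpAC is the maximum of $d/L$ over achievable $d$. *)

(* Defs.v *)
From HB Require Import structures.
From mathcomp Require Import all_boot all_order all_algebra.
From mathcomp Require Import reals.
From mathcomp.real_closed Require Import complex.
Set Implicit Arguments.
Unset Strict Implicit.
Unset Printing Implicit Defensive.
Import Order.TTheory GRing.Theory Num.Theory.
Local Open Scope ring_scope.

Definition in_box (R : realType) (X : finType) (a b : X -> R) (v : X -> R) : Prop :=
  forall x, a x <= v x <= b x.

Definition box_vol (R : realType) (X : finType) (a b : X -> R) : R :=
  \prod_(x : X) (b x - a x).

Definition lebesgue_null (R : realType) (X : finType) (A : (X -> R) -> Prop) : Prop :=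
  forall eps : R, 0 < eps ->
    exists (a b : nat -> X -> R),
      (forall k x, a k x <= b k x) /\
      (forall v, A v -> exists k, in_box (a k) (b k) v) /\
      (forall N, \sum_(k < N) box_vol (a k) (b k) <= eps).

(* Complex coordinates identified with real coordinates (Re, Im):
   C^Y is identified with R^(Y * bool). *)
Definition realify (R : realType) (Y : finType) (v : Y * bool -> R) : Y -> R[i] :=
  fun y => (v (y, false) +i* v (y, true))%C.

Definition ae_C (R : realType) (Y : finType) (P : (Y -> R[i]) -> Prop) : Prop :=
  lebesgue_null (fun v : Y * bool -> R => ~ P (realify v)).

(* Channel realization: h (i, l) is the l-th diagonal coefficient of H_{i,i}. *)
Definition Hmat (R : realType) (K L : nat) (h : 'I_K * 'I_L -> R[i]) (i : 'I_K)
  : 'M[R[i]]_L := diag_mx (\row_(l < L) h (i, l)).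

(* Column spaces are represented as row spaces of transposes (%MS). *)
Definition cond_a (R : realType) (K L d : nat) (Q : 'I_K -> 'M[R[i]]_(L, d))
  (h : 'I_K * 'I_L -> R[i]) (i : 'I_K) : bool :=
  row_full (\sum_(j < K) <<(Hmat h i *m Q j)^T>>)%MS.

Definition cond_b (R : realType) (K L d : nat) (Q : 'I_K -> 'M[R[i]]_(L, d))
  (h : 'I_K * 'I_L -> R[i]) (i : 'I_K) : bool :=
  ~~ ((Hmat h i *m Q i)^T <= \sum_(j < K | j != i) <<(Hmat h i *m Q j)^T>>)%MS.

Definition achievable (R : realType) (K L d : nat) : Prop :=
  exists Q : 'I_K -> 'M[R[i]]_(L, d),
    (forall j, \rank (Q j) = d) /\
    ae_C (fun h : 'I_K * 'I_L -> R[i] => forall i, cond_a Q h i && cond_b Q h i).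

(* Main.v *)
Require Import Defs.
From HB Require Import structures.
From mathcomp Require Import all_boot all_order all_algebra.
From mathcomp Require Import reals.
From mathcomp.real_closed Require Import complex.
From mathcomp Require Import all_classical all_reals all_analysis measurable_realfun.
From mathcomp Require Import ring lra.
Set Implicit Arguments.
Unset Strict Implicit.
Unset Printing Implicit Defensive.
Import Order.TTheory GRing.Theory Num.Theory.
Local Open Scope ring_scope.
Local Open Scope classical_set_scope.

Lemma oneD (R : realType) (w al be : nat -> R) (eps c : R) :
  (forall k, 0 <= w k) -> (forall k, al k <= be k) ->
  (forall N, \sum_(k < N) w k * (be k - al k) <= eps) -> eps < c ->
  exists t : R, forall N, \sum_(k < N) (if (al k <= t) && (t <= be k) then w k else 0) <= c.
Proof.
move=> w0 ab hs ec.
have e0 : 0 <= eps by have := hs 0%N; rewrite big_ord0.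
apply/not_existsP => hn.
have hc t : exists N, c < \sum_(k < N) (if (al k <= t) && (t <= be k) then w k else 0).
  have /existsNP[N /negP] := hn t; rewrite -ltNge => ?; by exists N.
pose I k : set R := `[al k, be k]%classic.
pose g k (t : R) := ((w k * \1_(I k) t)%R)%:E.
have gE k t : g k t = (if (al k <= t) && (t <= be k) then w k else 0)%:E.
  rewrite /g /I indicE; congr (_%:E).
  have -> : (t \in `[al k, be k]%classic) = ((al k <= t) && (t <= be k)).
    by apply/idP/idP; rewrite in_setE /= in_itv.
  by case: ifP; rewrite ?mulr1 ?mulr0.
have g0 k t : (0 <= g k t)%E by rewrite gE lee_fin; case: ifP.
have mI k : measurable (I k) by exact: measurable_itv.
have mg k : measurable_fun setT (g k).
  apply/measurable_EFinP; apply: measurable_funM => //.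
pose D : set R := `[0%R, 1%R]%classic.
have mD : measurable D by exact: measurable_itv.
pose F t := (\sum_(k <oo) g k t)%E.
have mF : measurable_fun D F.
  apply: (@ge0_emeasurable_sum _ _ _ _ g xpredT); [by move=> k x _ _; exact: g0 | by move=> k _; exact: measurable_funTS].
have lb : (\int[lebesgue_measure]_(x in D) (cst c%:E) x <= \int[lebesgue_measure]_(x in D) F x)%E.
  apply: ge0_le_integral => //.
  - by move=> x _; rewrite lee_fin; apply: (le_trans e0); exact: ltW.
  - move=> x _; rewrite /cst /=; have [N hN] := hc x.
    apply: le_trans (nneseries_lim_ge N _); last by move=> n _ _; exact: g0.
    rewrite (eq_bigr _ (fun k _ => gE k x)) sumEFin lee_fin big_mkord; exact: ltW.
have m01 : (lebesgue_measure D = 1%E).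
  by rewrite /D lebesgue_measure_itv /= lte_fin ltr01 oppr0 adde0.
rewrite integral_cst // (_ : _ D = 1%E) ?mule1 in lb; last exact: m01.
rewrite integral_nneseries // in lb; last by move=> n; exact: (measurable_funTS (mg n)).
have ub : (\sum_(n <oo) \int[lebesgue_measure]_(x in D) g n x <= eps%:E)%E.
  apply: lime_le; first by apply: is_cvg_ereal_nneg_natsum => n _; exact: integral_ge0.
  apply: nearW => N.
  apply: (@le_trans _ _ (\sum_(0 <= k < N) ((w k * (be k - al k))%:E))%E).
    apply: lee_sum => k _.
    rewrite /g; under eq_integral => x _ do rewrite EFinM.
    rewrite ge0_integralZl_EFin //; last first.
      by apply/measurable_EFinP; exact: (@measurable_indic _ _ R D (I k) (mI k)).
    rewrite (@integral_indic _ _ _ lebesgue_measure D mD (I k) (mI k)) EFinM; apply: lee_wpmul2l; first by rewrite lee_fin w0.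
    have mIk : lebesgue_measure (I k) = (be k - al k)%:E.
      rewrite /I lebesgue_measure_itv /= lte_fin; case: ltP => h //.
      have -> : be k = al k by apply: le_anti; rewrite h ab.
      by rewrite subrr.
    apply: (@le_trans _ _ (lebesgue_measure (I k))).
      by apply: le_measure; rewrite ?inE //; [apply: measurableI; [exact: (mI k) | exact: mD] | exact: (mI k)].
    by rewrite mIk.
  by rewrite sumEFin lee_fin big_mkord.
have := le_trans lb ub; rewrite lee_fin => /(lt_le_trans ec); by rewrite ltxx.
Qed.

Lemma notnull_ord (R : realType) (n : nat) : forall (eps : R), eps < 1 ->
  forall (sel : nat -> bool) (a b : nat -> 'I_n -> R),
  (forall k i, a k i <= b k i) ->
  (forall N, \sum_(k < N | sel k) box_vol (a k) (b k) <= eps) ->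
  exists v, forall k, sel k -> ~ in_box (a k) (b k) v.
Proof.
elim: n => [|n IH] eps e1 sel a b ab hs.
  exists (fun _ => 0) => k sk _.
  have := hs k.+1; rewrite big_mkcond big_ord_recr /= sk.
  rewrite /box_vol big_ord0 => h.
  have : 1 <= eps.
    apply: le_trans h; rewrite lerDr; apply: sumr_ge0 => i _.
    by case: ifP => // _; rewrite big_ord0.
  by rewrite leNgt e1.
pose a' k := fun i : 'I_n => a k (lift ord0 i).
pose b' k := fun i : 'I_n => b k (lift ord0 i).
pose w k := if sel k then box_vol (a' k) (b' k) else 0.
have bv0 k : 0 <= box_vol (a' k) (b' k).
  by rewrite /box_vol; apply: prodr_ge0 => i _; rewrite subr_ge0 ab.
have w0 k : 0 <= w k by rewrite /w; case: ifP.
pose c := (eps + 1) / 2.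
have ec : eps < c by rewrite /c; lra.
have c1 : c < 1 by rewrite /c; lra.
have [t ht] : exists t : R, forall N, \sum_(k < N)
    (if (a k ord0 <= t) && (t <= b k ord0) then w k else 0) <= c.
  apply: (oneD w0 (fun k => ab k ord0) _ ec) => N.
  suff -> : \sum_(k < N) w k * (b k ord0 - a k ord0) = \sum_(k < N | sel k) box_vol (a k) (b k) by exact: hs.
  rewrite [RHS]big_mkcond /=; apply: eq_bigr => k _.
  by rewrite /w /box_vol big_ord_recl; case: ifP => _; rewrite ?mul0r // mulrC.
have hs' N : \sum_(k < N | sel k && ((a k ord0 <= t) && (t <= b k ord0))) box_vol (a' k) (b' k) <= c.
  suff -> : \sum_(k < N | sel k && ((a k ord0 <= t) && (t <= b k ord0))) box_vol (a' k) (b' k) =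
     \sum_(k < N) (if (a k ord0 <= t) && (t <= b k ord0) then w k else 0) by exact: ht.
  rewrite big_mkcond /=; apply: eq_bigr => k _; rewrite /w.
  by case: (sel k) => /=; case: ifP.
have [v' hv'] := IH c c1 (fun k => sel k && ((a k ord0 <= t) && (t <= b k ord0))) a' b'
  (fun k i => ab k _) hs'.
exists (fun i => if unlift ord0 i is Some j then v' j else t) => k sk hb.
have h0 := hb ord0; rewrite unlift_none in h0.
apply: (hv' k); first by rewrite /= sk h0.
move=> j; have := hb (lift ord0 j); by rewrite liftK.
Qed.

Lemma null_compl (R : realType) (X : finType) (A : (X -> R) -> Prop) :
  lebesgue_null A -> exists v, ~ A v.
Proof.
move=> /(_ (1/2)) [|a [b [ab [cov hs]]]]; first by lra.
pose a' k := fun i : 'I_#|X| => a k (enum_val i).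
pose b' k := fun i : 'I_#|X| => b k (enum_val i).
have hs' N : \sum_(k < N | true) box_vol (a' k) (b' k) <= 1/2.
  apply: le_trans (hs N); rewrite le_eqVlt; apply/orP; left; apply/eqP.
  apply: eq_bigr => k _; rewrite /box_vol /a' /b'.
  rewrite [RHS](reindex (fun i : 'I_#|X| => enum_val i)) //.
  by exists enum_rank => x _; [exact: enum_valK | exact: enum_rankK].
have e1 : (1/2 : R) < 1 by lra.
have [v' hv'] := @notnull_ord R #|X| (1/2) e1 (fun _ => true) a' b' (fun k i => ab k _) hs'.
exists (fun x => v' (enum_rank x)) => /cov [k hk].
apply: (hv' k isT) => i; have := hk (enum_val i); by rewrite enum_valK.
Qed.

Lemma sum_widen (R : realType) (H : nat -> R) (N M : nat) : (N <= M)%N ->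
  (forall k, 0 <= H k) -> \sum_(k < N) H k <= \sum_(k < M) H k.
Proof.
move=> NM H0; rewrite -!(big_mkord xpredT) (@big_cat_nat _ _ _ N 0 M _ _ (leq0n N) NM) /=.
by rewrite lerDl; apply: sumr_ge0.
Qed.

Lemma interleave_sum (R : realType) (F G : nat -> R) N :
  \sum_(k < N.*2) (if odd k then G k./2 else F k./2) = \sum_(k < N) F k + \sum_(k < N) G k.
Proof.
elim: N => [|N IH]; first by rewrite !big_ord0 addr0.
rewrite doubleS !big_ord_recr /= IH.
rewrite odd_double /= uphalf_double half_double.
by rewrite -!addrA; congr (_ + _); rewrite addrCA.
Qed.

Lemma box_vol_ge0 (R : realType) (X : finType) (a b : X -> R) :
  (forall x, a x <= b x) -> 0 <= box_vol a b.
Proof. by move=> ab; rewrite /box_vol; apply: prodr_ge0 => i _; rewrite subr_ge0 ab. Qed.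

Lemma null_union (R : realType) (X : finType) (A B : (X -> R) -> Prop) :
  lebesgue_null A -> lebesgue_null B -> lebesgue_null (fun v => A v \/ B v).
Proof.
move=> nA nB eps e0.
have e2 : 0 < eps / 2 by lra.
have [a1 [b1 [ab1 [c1 s1]]]] := nA _ e2.
have [a2 [b2 [ab2 [c2 s2]]]] := nB _ e2.
exists (fun k => if odd k then a2 k./2 else a1 k./2).
exists (fun k => if odd k then b2 k./2 else b1 k./2).
split; first by move=> k x; case: ifP.
split.
  move=> v [/c1 [k hk]|/c2 [k hk]].
    by exists k.*2; rewrite odd_double half_double.
  by exists k.*2.+1; rewrite /= odd_double /= uphalf_double.
move=> N.
apply: (@le_trans _ _ (\sum_(k < N.*2) box_vol (if odd k then a2 k./2 else a1 k./2)
      (if odd k then b2 k./2 else b1 k./2))).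
  apply: (@sum_widen R (fun k => box_vol (if odd k then a2 k./2 else a1 k./2)
      (if odd k then b2 k./2 else b1 k./2))); first by rewrite -addnn leq_addr.
  by move=> k; apply: box_vol_ge0 => x; case: ifP.
have -> : \sum_(k < N.*2) box_vol (if odd k then a2 k./2 else a1 k./2)
      (if odd k then b2 k./2 else b1 k./2) =
   \sum_(k < N.*2) (if odd k then box_vol (a2 k./2) (b2 k./2) else box_vol (a1 k./2) (b1 k./2)).
  by apply: eq_bigr => k _; case: ifP.
rewrite (interleave_sum (fun k => box_vol (a1 k) (b1 k)) (fun k => box_vol (a2 k) (b2 k))).
have := s1 N; have := s2 N; lra.
Qed.

Lemma geom_sum (R : realType) (eps : R) N :
  \sum_(k < N) eps / 2 ^+ k.+1 = eps - eps / 2 ^+ N.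
Proof.
elim: N => [|N IH]; first by rewrite big_ord0 expr0 divr1 subrr.
rewrite big_ord_recr /= IH exprS.
have h2 : (2 : R) ^+ N != 0 by rewrite expf_neq0.
field; by rewrite h2.
Qed.

Lemma null_hyper (R : realType) (X : finType) (y0 : X) :
  lebesgue_null (fun v : X -> R => v y0 = 0).
Proof.
move=> eps e0.
pose P (k : nat) : R := \prod_(y : X) (if y == y0 then 1 else 2 * k%:R + 1).
have P0 k : 0 < P k by apply: prodr_gt0 => y _; case: ifP => // _; rewrite ltr_wpDl // mulr_ge0.
pose del (k : nat) : R := eps / (2 ^+ k.+2 * P k).
have d0 k : 0 < del k by rewrite /del divr_gt0 // mulr_gt0 // exprn_gt0.
exists (fun k y => if y == y0 then - del k else - k%:R).
exists (fun k y => if y == y0 then del k else k%:R).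
have vb k : box_vol (fun y => if y == y0 then - del k else - k%:R)
   (fun y => if y == y0 then del k else k%:R) <= eps / 2 ^+ k.+1.
  rewrite /box_vol.
  pose E2 y := (if y == y0 then 2 * del k else 1) * (if y == y0 then 1 else 2 * k%:R + 1).
  apply: (@le_trans _ _ (\prod_(y : X) E2 y)); last first.
    rewrite big_split /= (bigD1 y0) //= eqxx big1 ?mulr1; last by move=> y /negbTE ->.
    rewrite /del -/(P k); have := P0 k; rewrite lt0r => /andP[Pn _].
    rewrite le_eqVlt; apply/orP; left; apply/eqP.
    have h2 : (2 : R) ^+ k.+1 != 0 by rewrite expf_neq0.
    by rewrite [2 ^+ k.+2]exprS; field; rewrite h2 Pn.
  apply: ler_prod => y _; rewrite /E2; have := d0 k; have := ler0n R k; case: ifP => _; lra.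
split.
  move=> k x; have := d0 k; have := ler0n R k; case: ifP => _; lra.
split.
  move=> v hv; pose s := \sum_(y : X) `|v y|.
  have s0 : 0 <= s by apply: sumr_ge0 => y _.
  exists (Num.Def.archi_bound s) => y.
  have := archi_boundP s0; set k := Num.Def.archi_bound s => hk.
  case: ifP => [/eqP ->|_]; first by rewrite hv; have := d0 k; lra.
  have : `|v y| <= s.
    by rewrite /s (bigD1 y) //= lerDl; apply: sumr_ge0 => ? _.
  move=> hy; have : `|v y| <= k%:R by lra.
  by rewrite ler_norml.
move=> N.
apply: (@le_trans _ _ (\sum_(k < N) eps / 2 ^+ k.+1)).
  by apply: ler_sum => k _; exact: vb.
rewrite geom_sum; have : 0 <= eps / 2 ^+ N by rewrite divr_ge0 // ?ltW // exprn_ge0.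
lra.
Qed.

From mathcomp Require Import zify.

Lemma chain (F : fieldType) (K L d : nat) (M : 'I_K -> 'M[F]_(d, L)) :
  (0 < K)%N -> (forall j, \rank (M j) = d) ->
  (forall i, ~~ (M i <= \sum_(j < K | j != i) genmx (M j))%MS) -> (d + K <= L + 1)%N.
Proof.
move=> K0 hr hb.
pose T m := (\sum_(j < K | (j < m)%N) genmx (M j))%MS.
have Tsup m (j : 'I_K) : (j < m)%N -> (M j <= T m)%MS.
  by move=> hj; apply: (sumsmx_sup j) => //; rewrite genmxE.
have key m : (m < K)%N -> (d + m <= \rank (T m.+1))%N.
  elim: m => [|m IH] Hm.
    by rewrite addn0 -(hr (Ordinal Hm)); apply: mxrankS; exact: Tsup.
  have := IH (ltnW Hm) => {}IH.
  have sub : (T m.+1 <= T m.+2)%MS.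
    apply/sumsmx_subP => j hj; apply: (sumsmx_sup j) => //; first by rewrite ltnS ltnW.
  pose jm := Ordinal Hm.
  have nsub : ~~ (T m.+2 <= T m.+1)%MS.
    apply/negP => hT; apply: (negP (hb jm)).
    apply: (submx_trans (Tsup m.+2 jm (ltnSn _))); apply: (submx_trans hT).
    apply/sumsmx_subP => j hj; apply: (sumsmx_sup j) => //.
    by apply/eqP => hjm; move: hj; rewrite hjm /= ltnn.
  have [le eq] := mxrank_leqif_sup sub.
  have : (\rank (T m.+1) < \rank (T m.+2))%N by rewrite ltn_neqAle le eq nsub.
  lia.
have := key K.-1 (ltac:(lia)); rewrite prednK //.
have := rank_leq_col (T K); lia.
Qed.

Lemma part1 (R : realType) (K L : nat) (HK : (0 < K)%N) d :
  achievable R K L d -> (d + K <= L + 1)%N.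
Proof.
move=> [Q [hr hae]].
have [v hv] := null_compl hae.
have hP : forall i, cond_a Q (realify v) i && cond_b Q (realify v) i.
  by apply: contrapT.
apply: (chain (M := fun j => (Q j)^T)) => //.
  by move=> j; rewrite mxrank_tr.
move=> i; have /andP[_ hb] := hP i; move: hb; apply: contra => hs.
rewrite /Hmat trmx_mul tr_diag_mx.
apply: (submx_trans (submxMr _ hs)).
rewrite sumsmxMr.
apply: sumsmxS => j _; rewrite genmxE trmx_mul tr_diag_mx; apply: submxMr; rewrite genmxE; exact: submx_refl.
Qed.


Lemma null_sub (R : realType) (X : finType) (A B : (X -> R) -> Prop) :
  (forall v, A v -> B v) -> lebesgue_null B -> lebesgue_null A.
Proof.
move=> AB nB eps e0; have [a [b [ab [cov hs]]]] := nB eps e0.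
by exists a, b; split => //; split => // v /AB /cov.
Qed.

Lemma null_ex (R : realType) (X Y : finType) (y0 : Y) (P : Y -> (X -> R) -> Prop) :
  (forall y, lebesgue_null (P y)) -> lebesgue_null (fun v => exists y, P y v).
Proof.
move=> nP.
have gen (s : seq Y) : lebesgue_null (fun v => P y0 v \/ exists y, y \in s /\ P y v).
  elim: s => [|y s IH].
    by apply: null_sub (nP y0) => v [//|[y []]].
  apply: null_sub (null_union (nP y) IH) => v [hv|[z [zs hz]]]; first by right; left.
  move: zs; rewrite in_cons => /orP[/eqP <-|zs]; first by left.
  by right; right; exists z.
apply: null_sub (gen (enum Y)) => v [y hy]; right; exists y; split => //.
by rewrite mem_enum.
Qed.

Lemma cplx0 (R : realType) (a b : R) : (a +i* b)%C = 0 -> a = 0.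
Proof. by case. Qed.

Definition fnat (K j c : nat) : nat := if c == 0%N then j else (K + c.-1)%N.

Definition Qd (R : realType) (K L : nat) (j : 'I_K) : 'M[R[i]]_(L, L - K + 1) :=
  \matrix_(l < L, c < L - K + 1) ((l == fnat K j c :> nat))%:R.

Lemma fnat_lt K L j c : (K <= L)%N -> (j < K)%N -> (c < L - K + 1)%N -> (fnat K j c < L)%N.
Proof. rewrite /fnat; case: eqP => h; lia. Qed.

Lemma fnat_inj K j c c' : (j < K)%N -> (fnat K j c == fnat K j c') = (c == c').
Proof. move=> hj; rewrite /fnat; case: (c =P 0%N) => h1; case: (c' =P 0%N) => h2; apply/idP/idP => /eqP h; apply/eqP; lia. Qed.

Lemma rank_Qd (R : realType) K L (KL : (K <= L)%N) (j : 'I_K) :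
  \rank (Qd R L j) = (L - K + 1)%N.
Proof.
have QQ : (Qd R L j)^T *m Qd R L j = 1%:M.
  apply/matrixP => c c'; rewrite !mxE.
  rewrite (bigD1 (Ordinal (fnat_lt KL (ltn_ord j) (ltn_ord c)))) //= big1.
    rewrite !mxE /= eqxx fnat_inj // mul1r addr0.
    by case: (c =P c') => [->|h]; rewrite ?eqxx //; case: eqP => // /val_inj.
  move=> l hl; rewrite !mxE.
  have -> : (l == fnat K j c :> nat) = false.
    by apply/negbTE; apply: contra hl => /eqP h; apply/eqP/val_inj.
  by rewrite mul0r.
apply/eqP; rewrite eqn_leq rank_leq_col /=.
by rewrite -{1}(mxrank1 R[i] (L - K + 1)) -QQ mxrankM_maxr.
Qed.

Lemma HQ_entry (R : realType) K L (h : 'I_K * 'I_L -> R[i]) (i j : 'I_K) l c :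
  (Hmat h i *m Qd R L j) l c = h (i, l) * ((l == fnat K j c :> nat))%:R.
Proof. by rewrite /Hmat mul_diag_mx !mxE. Qed.

Lemma coltr (F : fieldType) m n (M : 'M[F]_(m, n)) (i : 'I_m) c z :
  (col i M^T) c z = M i c.
Proof. by rewrite !mxE. Qed.

Lemma condb_Qd (R : realType) K L (KL : (K <= L)%N) (h : 'I_K * 'I_L -> R[i])
  (hnz : forall x, h x != 0) (i : 'I_K) : cond_b (Qd R L) h i.
Proof.
pose i' : 'I_L := Ordinal (leq_trans (ltn_ord i) KL).
pose P : 'cV[R[i]]_L := delta_mx i' 0.
have zero j : j != i -> (Hmat h i *m Qd R L j)^T *m P = 0.
  move=> ji; rewrite /P -colE; apply/matrixP => c z; rewrite coltr HQ_entry [RHS]mxE.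
  have -> : (i' == fnat K j c :> nat) = false.
    rewrite /fnat /=; case: (val c =P 0%N) => hc.
      by apply/negbTE; apply: contra ji => /eqP h1; apply/eqP/val_inj.
    have := ltn_ord i; lia.
  by rewrite mulr0.
have c0 : (0 < L - K + 1)%N by rewrite addn1.
have nz : (Hmat h i *m Qd R L i)^T *m P != 0.
  apply/negP => /eqP /matrixP /(_ (Ordinal c0) 0); rewrite /P -colE coltr HQ_entry [RHS]mxE.
  by rewrite /fnat /= eqxx mulr1 => /eqP; rewrite (negbTE (hnz _)).
rewrite /cond_b; apply/negP => hs.
have : ((Hmat h i *m Qd R L i)^T <= kermx P)%MS.
  apply: submx_trans hs _; apply/sumsmx_subP => j ji; rewrite genmxE sub_kermx zero //.
by rewrite sub_kermx (negbTE nz).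
Qed.

Lemma conda_Qd (R : realType) K L (KL : (K <= L)%N) (h : 'I_K * 'I_L -> R[i])
  (hnz : forall x, h x != 0) (i : 'I_K) : cond_a (Qd R L) h i.
Proof.
rewrite /cond_a -sub1mx; apply/row_subP => l; rewrite row1.
have [j [c hjc]] : exists (j : 'I_K) (c : 'I_(L - K + 1)), fnat K j c = l.
  case: (ltnP l K) => hl.
    have c0 : (0 < L - K + 1)%N by rewrite addn1.
    by exists (Ordinal hl), (Ordinal c0).
  have c1 : (l - K + 1 < L - K + 1)%N by have := ltn_ord l; lia.
  exists i, (Ordinal c1); rewrite /fnat /=; case: eqP => h1; lia.
apply: (sumsmx_sup j) => //; rewrite genmxE.
have -> : (delta_mx 0 l : 'rV[R[i]]_L) = ((h (i, l))^-1 *: (delta_mx 0 c : 'rV_(L - K + 1))) *m (Hmat h i *m Qd R L j)^T.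
  apply/matrixP => z l'; rewrite [RHS]mxE (bigD1 c) //= big1 => [|c' hc']; last first.
    by rewrite !mxE (negbTE hc') andbF mulr0 mul0r.
  rewrite addr0 /Hmat mul_diag_mx !mxE hjc (ord1 z) !eqxx /=.
  case: (l' =P l) => [->|hl']; first by rewrite eqxx !mulr1 mulVf.
  have -> : (l' == l :> nat) = false by apply/negbTE; apply: contra_not_neq hl' => /val_inj.
  by rewrite !mulr0.
exact: submxMl.
Qed.

Lemma part2 (R : realType) (K L : nat) (HK : (0 < K)%N) (HL : (0 < L)%N) (KL : (K <= L)%N) :
  achievable R K L (L - K + 1).
Proof.
exists (Qd R L); split; first by move=> j; exact: rank_Qd.
rewrite /ae_C.
pose x0 : 'I_K * 'I_L := (Ordinal HK, Ordinal HL).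
have nZ := @null_ex R _ _ x0 (fun x (v : ('I_K * 'I_L) * bool -> R) => v (x, false) = 0)
  (fun x => null_hyper (x, false)).
apply: null_sub nZ => v nP /=.
apply/not_existsP => hz; apply: nP => i.
have hnz : forall x, realify v x != 0.
  by move=> x; apply/eqP; rewrite /realify => /cplx0; exact: hz.
by rewrite conda_Qd ?condb_Qd.
Qed.

Theorem theorem1 (R : realType) (K L : nat) (HK : (0 < K)%N) (HL : (0 < L)%N) :
  (forall d : nat, achievable R K L d -> (d + K <= L + 1)%N) /\
  ((K <= L)%N -> achievable R K L (L - K + 1)).
Proof.
split; first by move=> d; exact: part1.
by move=> KL; exact: part2.
Qed.
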